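(* There exist finite sets $\mathcal{X},\mathcal{Y}$, a closed convex model class $\Pi\subseteq\Pi_{\mathrm{all}}$, an involution $\Phi$ on $\mathcal{X}$ defining a nontrivial coherence set $\mathcal{C}_{\mathrm{coh}}$, a source model $\pi_0\colon\mathcal{X}\to\Delta(\mathcal{Y})$ with $\pi_0\notin\Pi$, and a convex family $\mathcal{F}$ of Legendre generators such that the minimax solution $$\pi^*_{mm}=\arg\min_{\pi\in\Pi\cap\mathcal{C}_{\mathrm{coh}}}\max_{F\in\mathcal{F}}\mathsf{B}_F(\pi\parallel\pi_0)$$ is unique and there exist $F\in\mathcal{F}$ and $\pi^*\in\Pi\cap\mathcal{C}_{\mathrm{coh}}$ with $\mathsf{B}_F(\pi^*\parallel\pi^*_{mm})>\mathsf{B}_F(\pi^*\parallel\pi_0)$.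
   Context: A model is a map $\pi\colon\mathcal{X}\to\Delta(\mathcal{Y})$, identified with a vector in $\mathbb{R}^{\mathcal{X}\times\mathcal{Y}}$; $\Pi_{\mathrm{all}}=\Delta(\mathcal{Y})^{\mathcal{X}}$; $\mathcal{C}_{\mathrm{coh}}=\{\pi\in\Pi_{\mathrm{all}}:\pi(x)=\pi(\Phi(x))\ \forall x\}$. For a generator $F$ on $\mathbb{R}^{\mathcal{X}\times\mathcal{Y}}$, $\mathsf{B}_F(\pi\parallel\pi')=F(\pi)-F(\pi')-\langle\nabla F(\pi'),\pi-\pi'\rangle$. A Legendre generator is a proper closed convex function differentiable on the interior of its domain whose gradient is a bijection onto the interior of the domain of its conjugate. *)

(* Defs.v *)
From HB Require Import structures.
From mathcomp Require Import all_boot all_order all_algebra.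
From mathcomp Require Import all_classical all_reals all_analysis.
From mathcomp Require Export Rstruct.
From Stdlib Require Import ClassicalEpsilon.
Set Implicit Arguments. Unset Strict Implicit. Unset Printing Implicit Defensive.
Import Order.TTheory GRing.Theory Num.Theory.
Local Open Scope ring_scope.
Local Open Scope classical_set_scope.

Section Defs.
Variables (R : realType) (X Y : finType).

(* vectors of R^{X x Y}; a model pi : X -> Delta(Y) is such a vector *)
Definition vec := X -> Y -> R.

Definition inner (a b : vec) : R := \sum_(x : X) \sum_(y : Y) a x y * b x y.
Definition vsub (a b : vec) : vec := fun x y => a x y - b x y.
Definition vcomb (t : R) (a b : vec) : vec := fun x y => t * a x y + (1 - t) * b x y.
(* l1 norm on R^{X x Y} (all norms are equivalent in finite dimension) *)
Definition l1 (a : vec) : R := \sum_(x : X) \sum_(y : Y) `|a x y|.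

Definition Pi_all : set vec :=
  [set p | (forall x y, 0 <= p x y) /\ (forall x, \sum_(y : Y) p x y = 1)].

Definition C_coh (Phi : X -> X) : set vec :=
  [set p | Pi_all p /\ (forall x, p x = p (Phi x))].

Definition vclosed (S : set vec) : Prop :=
  forall p, (forall e : R, 0 < e -> exists q, S q /\ l1 (vsub q p) < e) -> S p.
Definition vinterior (S : set vec) : set vec :=
  [set p | exists2 e : R, 0 < e & forall q, l1 (vsub q p) < e -> S q].
Definition vconvex (S : set vec) : Prop :=
  forall p q (t : R), S p -> S q -> 0 <= t <= 1 -> S (vcomb t p q).

Definition dom (F : vec -> \bar R) : set vec := [set p | (F p < +oo)%E].
Definition proper_fun (F : vec -> \bar R) : Prop :=
  (forall p, F p <> -oo%E) /\ (exists p, dom F p).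
Definition convex_fun (F : vec -> \bar R) : Prop :=
  forall p q (t : R), dom F p -> dom F q -> 0 <= t <= 1 ->
    (F (vcomb t p q) <= (t * fine (F p) + (1 - t) * fine (F q))%:E)%E.
(* closed = lower semicontinuous = all sublevel sets closed *)
Definition closed_fun (F : vec -> \bar R) : Prop :=
  forall a : R, vclosed [set p | (F p <= a%:E)%E].

Definition diff_at (F : vec -> \bar R) (p g : vec) : Prop :=
  (exists2 e : R, 0 < e & forall q, l1 (vsub q p) < e -> F q \is a fin_num) /\
  (forall eps : R, 0 < eps -> exists2 d : R, 0 < d & forall q, l1 (vsub q p) < d ->
     `|fine (F q) - fine (F p) - inner g (vsub q p)| <= eps * l1 (vsub q p)).

(* the gradient of F at p (meaningful where F is differentiable) *)
Definition grad (F : vec -> \bar R) (p : vec) : vec :=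
  epsilon (inhabits (fun _ _ => 0 : R)) (fun g => diff_at F p g).

Definition conjugate (F : vec -> \bar R) : vec -> \bar R :=
  fun y => ereal_sup [set ((inner p y)%:E - F p)%E | p in [set: vec]].

Definition legendre (F : vec -> \bar R) : Prop :=
  [/\ proper_fun F, convex_fun F /\ closed_fun F,
      (forall p, vinterior (dom F) p -> diff_at F p (grad F p)),
      (forall p q, vinterior (dom F) p -> vinterior (dom F) q ->
          grad F p = grad F q -> p = q)
    & grad F @` vinterior (dom F) = vinterior (dom (conjugate F))].

Definition bregman (F : vec -> \bar R) (p q : vec) : \bar R :=
  (F p - F q - (inner (grad F q) (vsub p q))%:E)%E.

Definition fam_convex (fam : set (vec -> \bar R)) : Prop :=
  forall F G (t : R), fam F -> fam G -> 0 <= t <= 1 ->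
    fam (fun p => (t%:E * F p + (1 - t)%:E * G p)%E).

Definition mm_objective (fam : set (vec -> \bar R)) (pi0 pi : vec) : \bar R :=
  ereal_sup [set bregman F pi pi0 | F in fam].

Definition is_minimax (Pi : set vec) (Phi : X -> X) (fam : set (vec -> \bar R))
    (pi0 pi : vec) : Prop :=
  (Pi `&` C_coh Phi) pi /\
  forall q, (Pi `&` C_coh Phi) q -> (mm_objective fam pi0 pi <= mm_objective fam pi0 q)%E.

End Defs.

(* Main.v *)
Require Import Defs.
From HB Require Import structures.
From mathcomp Require Import all_boot all_order all_algebra.
From mathcomp Require Import all_classical all_reals all_analysis.
From mathcomp Require Import Rstruct.
From mathcomp Require Import ring lra.
From Stdlib Require Import ClassicalEpsilon.
Set Implicit Arguments. Unset Strict Implicit.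
Import Order.TTheory GRing.Theory Num.Theory.
Local Open Scope ring_scope.
Local Open Scope classical_set_scope.

Section Gen.
Variables (R : realType) (X Y : finType).
Local Notation vec := (vec R X Y).

Lemma sum2_lin (t u : R) (f g : vec) :
  \sum_x \sum_y (t * f x y + u * g x y) =
  t * \sum_x \sum_y f x y + u * \sum_x \sum_y g x y.
Proof.
rewrite !mulr_sumr -big_split; apply: eq_bigr => x _.
by rewrite !mulr_sumr -big_split.
Qed.

Lemma sum2B (f g : vec) :
  \sum_x \sum_y (f x y - g x y) = \sum_x \sum_y f x y - \sum_x \sum_y g x y.
Proof.
rewrite -sumrB; apply: eq_bigr => x _; by rewrite sumrB.
Qed.

Lemma sum2_le (f g : vec) : (forall x y, f x y <= g x y) ->
  \sum_x \sum_y f x y <= \sum_x \sum_y g x y.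
Proof. by move=> H; apply: ler_sum => x _; apply: ler_sum => y _. Qed.

Lemma sum2_ge0 (f : vec) : (forall x y, 0 <= f x y) -> 0 <= \sum_x \sum_y f x y.
Proof. by move=> H; apply: sumr_ge0 => x _; apply: sumr_ge0 => y _. Qed.

Lemma sum_single (f : vec) x y :
  (forall x' y', (x' != x) || (y' != y) -> f x' y' = 0) ->
  \sum_x' \sum_y' f x' y' = f x y.
Proof.
move=> H; rewrite (bigD1 x) //= (bigD1 y) //= big1 ?addr0.
  rewrite big1 ?addr0 // => x' nx; apply: big1 => y' _; apply: H; by rewrite nx.
by move=> y' ny; apply: H; rewrite ny orbT.
Qed.

Lemma coord_le_l1 (v : vec) x y : `|v x y| <= l1 v.
Proof.
rewrite /l1 (bigD1 x) //= (bigD1 y) //=.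
rewrite -addrA lerDl; apply: addr_ge0.
  by apply: sumr_ge0.
by apply: sumr_ge0 => x' _; apply: sumr_ge0.
Qed.

Lemma l1_ge0 (v : vec) : 0 <= l1 v.
Proof. by apply: sum2_ge0. Qed.

Lemma inner_bound (g v : vec) :
  `|inner g v| <= (\sum_x \sum_y `|g x y|) * l1 v.
Proof.
rewrite /inner /l1 mulr_suml.
apply: le_trans (ler_norm_sum _ _ _) _; apply: ler_sum => x _.
rewrite mulr_suml.
apply: le_trans (ler_norm_sum _ _ _) _; apply: ler_sum => y _.
rewrite normrM; apply: ler_wpM2l => //.
exact: (coord_le_l1 v x y).
Qed.

Lemma zero_of_small (z : R) : (forall e, 0 < e -> `|z| <= 2 * e) -> z = 0.
Proof.
move=> H; apply/eqP; rewrite -normr_eq0; apply/eqP.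
have [z0|zpos] := eqVneq `|z| 0; first by [].
have hp : 0 < `|z| by rewrite lt_def zpos normr_ge0.
have h4 : (0:R) < 4 by lra.
have := H (`|z| / 4) (divr_gt0 hp h4). lra.
Qed.

Lemma diff_unique (F : vec -> \bar R) p g1 g2 :
  diff_at F p g1 -> diff_at F p g2 -> g1 = g2.
Proof.
move=> [_ H1] [_ H2].
apply/funext => x; apply/funext => y.
apply/eqP; rewrite -subr_eq0; apply/eqP; apply: zero_of_small => e e0.
have [d1 d10 D1] := H1 e e0.
have [d2 d20 D2] := H2 e e0.
pose s := Num.min d1 d2 / 2.
have s0 : 0 < s by rewrite divr_gt0 // lt_min d10 d20.
pose v : vec := fun x' y' => if (x' == x) && (y' == y) then s else 0.
pose q : vec := fun x' y' => p x' y' + v x' y'.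
have vq : vsub q p = v.
  by apply/funext => x'; apply/funext => y'; rewrite /vsub /q addrAC subrr add0r.
have l1v : l1 v = s.
  rewrite /l1 (sum_single (f:=fun x' y' => `|v x' y'|) (x:=x) (y:=y)).
    by rewrite /v !eqxx /= gtr0_norm.
  by move=> x' y'; rewrite /v; case: (x' == x); case: (y' == y) => //= _; rewrite normr0.
have inv g : inner g v = g x y * s.
  rewrite /inner (sum_single (f:=fun x' y' => g x' y' * v x' y') (x:=x) (y:=y)).
    by rewrite /v !eqxx.
  by move=> x' y'; rewrite /v; case: (x' == x); case: (y' == y) => //= _; rewrite mulr0.
have m1 : Num.min d1 d2 <= d1 by rewrite ge_min lexx.
have m2 : Num.min d1 d2 <= d2 by rewrite ge_min lexx orbT.
have m0 : 0 < Num.min d1 d2 by rewrite lt_min d10 d20.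
have sd1 : s < d1 by rewrite /s; lra.
have sd2 : s < d2 by rewrite /s; lra.
have := D1 q; have := D2 q; rewrite vq l1v !inv => /(_ sd2) A /(_ sd1) B.
move: A B => /ler_normlP [A1 A2] /ler_normlP [B1 B2].
apply/ler_normlP; split; nra.
Qed.

Section Quad.
Variables (w : vec) (M : R).
Hypothesis wpos : forall x y, 0 < w x y.
Hypothesis wle : forall x y, w x y <= M.
Hypothesis M0 : 0 < M.

Definition Q (p : vec) : R := \sum_x \sum_y w x y * p x y ^+ 2.
Definition Fq (p : vec) : \bar R := (Q p)%:E.
Definition gq (p : vec) : vec := fun x y => 2 * w x y * p x y.

Lemma Q_expand p q :
  Q q - Q p - inner (gq p) (vsub q p) = \sum_x \sum_y w x y * (q x y - p x y) ^+ 2.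
Proof.
rewrite /Q /inner -!sum2B; apply: eq_bigr => x _; apply: eq_bigr => y _.
rewrite /gq /vsub; ring.
Qed.

Lemma sum2_scale (c : R) (f : vec) :
  \sum_x \sum_y c * f x y = c * \sum_x \sum_y f x y.
Proof. rewrite mulr_sumr; apply: eq_bigr => x _; by rewrite mulr_sumr. Qed.

Lemma Q_diff p : diff_at Fq p (gq p).
Proof.
split; first by exists 1 => // q _.
move=> eps eps0; exists (eps / M); first exact: divr_gt0.
move=> q Hq; rewrite /Fq /= Q_expand.
set L := l1 (vsub q p).
have L0 : 0 <= L by exact: l1_ge0.
have S0 : 0 <= \sum_x \sum_y w x y * (q x y - p x y) ^+ 2.
  by apply: sum2_ge0 => x y; apply: mulr_ge0; [exact: ltW|exact: sqr_ge0].
rewrite ger0_norm //.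
apply: (le_trans (y := \sum_x \sum_y (M * L) * `|q x y - p x y|)).
  apply: sum2_le => x y.
  have h1 := coord_le_l1 (vsub q p) x y; rewrite /vsub in h1.
  have h2 : (q x y - p x y) ^+ 2 = `|q x y - p x y| ^+ 2 by rewrite real_normK // num_real.
  rewrite h2.
  have h3 := normr_ge0 (q x y - p x y).
  have h4 := wpos x y; have h5 := wle x y.
  rewrite -/L in h1.
  set d := `|q x y - p x y|.
  have a1 : d * d <= d * L by apply: ler_wpM2l.
  have a2 : w x y * (d * d) <= M * (d * d) by apply: ler_wpM2r => //; apply: mulr_ge0.
  have a3 : M * (d * d) <= M * (d * L) by apply: ler_wpM2l => //; exact: ltW.
  rewrite expr2; apply: (le_trans a2); apply: (le_trans a3).
  by rewrite (_ : M * (d * L) = M * L * d) //; ring.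
rewrite sum2_scale.
have -> : \sum_x \sum_y `|q x y - p x y| = L by [].
have ML : M * L <= eps.
  rewrite mulrC -ler_pdivlMr //; exact: ltW.
nra.
Qed.

Lemma grad_Fq p : grad Fq p = gq p.
Proof.
rewrite /grad.
have H := epsilon_spec (inhabits (fun _ _ => 0 : R)) (fun g => diff_at Fq p g)
  (ex_intro _ _ (Q_diff p)).
exact: diff_unique H (Q_diff p).
Qed.

Lemma Q_closed : closed_fun Fq.
Proof.
move=> a p Hp; rewrite /= /Fq lee_fin.
have [//|Hlt] := leP (Q p) a.
set G := \sum_x \sum_y `|gq p x y|.
have G0 : 0 <= G by apply: sum2_ge0.
set e := (Q p - a) / (G + 1).
have e0 : 0 < e by rewrite divr_gt0 // ?subr_gt0 //; lra.
have [q [Hq Hl]] := Hp e e0.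
move: Hq; rewrite /= /Fq lee_fin => Hq.
have E := Q_expand p q.
have Sn : 0 <= \sum_x \sum_y w x y * (q x y - p x y) ^+ 2.
  by apply: sum2_ge0 => x y; apply: mulr_ge0; [exact: ltW|exact: sqr_ge0].
have /ler_normlP [I1 I2] := inner_bound (gq p) (vsub q p).
rewrite -/G in I1 I2.
have eG : e * (G + 1) = Q p - a by rewrite /e divfK //; lra.
have L0 := l1_ge0 (vsub q p).
nra.
Qed.

Lemma Q_convex : convex_fun Fq.
Proof.
move=> p q t _ _ /andP[t0 t1]; rewrite /Fq /= lee_fin /Q -sum2_lin.
apply: sum2_le => x y; rewrite /vcomb.
have -> : t * (w x y * p x y ^+ 2) + (1 - t) * (w x y * q x y ^+ 2) =
  w x y * (t * p x y + (1 - t) * q x y) ^+ 2 +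
  w x y * t * (1 - t) * (p x y - q x y) ^+ 2 by ring.
rewrite lerDl; apply: mulr_ge0; last exact: sqr_ge0.
apply: mulr_ge0; last lra.
apply: mulr_ge0 => //; exact: ltW.
Qed.

Lemma dom_Fq : dom Fq = setT.
Proof. by apply/seteqP; split => p //= _; exact: ltry. Qed.

Lemma vint_setT : vinterior (setT : set vec) = setT.
Proof. by apply/seteqP; split => p // _; exists 1. Qed.

Lemma conj_fin yv : (conjugate Fq yv < +oo)%E.
Proof.
apply: (le_lt_trans _ (ltry (\sum_x \sum_y yv x y ^+ 2 / (4 * w x y)))).
apply: ge_ereal_sup => _ [p _ <-]; rewrite /Fq -EFinB lee_fin /inner /Q -sum2B.
apply: sum2_le => x y.
have wp := wpos x y.
have -> : yv x y ^+ 2 / (4 * w x y) =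
  (p x y * yv x y - w x y * p x y ^+ 2) + (2 * w x y * p x y - yv x y) ^+ 2 / (4 * w x y).
  field; lra.
rewrite lerDl; apply: divr_ge0; [exact: sqr_ge0|lra].
Qed.

Lemma dom_conj : dom (conjugate Fq) = setT.
Proof. by apply/seteqP; split => p //= _; exact: conj_fin. Qed.

Lemma legendre_Fq : legendre Fq.
Proof.
split.
- by split => //; exists (fun _ _ => 0); exact: ltry.
- by split; [exact: Q_convex | exact: Q_closed].
- by move=> p _; rewrite grad_Fq; exact: Q_diff.
- move=> p q _ _; rewrite !grad_Fq => H.
  apply/funext => x; apply/funext => y.
  have := congr1 (fun f => f x y) H; rewrite /gq => h.
  have wp := wpos x y.
  have nz : (2 * w x y : R) != 0 by rewrite gt_eqF // mulr_gt0.
  exact: (@mulfI R _ nz _ _ h).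
- rewrite dom_Fq dom_conj vint_setT; apply/seteqP; split => // g _.
  exists (fun x y => g x y / (2 * w x y)) => //; rewrite grad_Fq.
  apply/funext => x; apply/funext => y; rewrite /gq mulrC divfK //.
  have wp := wpos x y; lra.
Qed.

Lemma bregman_Fq p q :
  bregman Fq p q = (\sum_x \sum_y w x y * (p x y - q x y) ^+ 2)%:E.
Proof. by rewrite /bregman grad_Fq /Fq -!EFinB Q_expand. Qed.

End Quad.
End Gen.
Section Ex.
Variable R : realType.
Local Notation V := (vec R bool bool).

Definition w1 : V := fun x _ => if x then 1 else 4.
Definition w2 : V := fun x _ => if x then 4 else 1.
Definition wmix (t : R) : V := fun x y => t * w1 x y + (1 - t) * w2 x y.
Definition fam : set (V -> \bar R) :=
  [set F | exists2 t : R, 0 <= t <= 1 & F = Fq (wmix t)].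
Definition pi0 : V := fun x y => if x then (if y then 0 else 1) else (if y then 1 else 0).
Definition pimm : V := fun _ _ => 1 / 2.
Definition pis : V := fun _ y => if y then 1 else 0.
Definition Pi : set V := C_coh negb.

Lemma wmix_pos t : 0 <= t <= 1 -> forall x y, 0 < wmix t x y.
Proof. by move=> /andP[t0 t1] x y; rewrite /wmix /w1 /w2; case: x => /=; lra. Qed.
Lemma wmix_le t : 0 <= t <= 1 -> forall x y, wmix t x y <= 4.
Proof. by move=> /andP[t0 t1] x y; rewrite /wmix /w1 /w2; case: x => /=; lra. Qed.

Lemma fam_legendre F : fam F -> legendre F /\ (forall p, vinterior (dom F) p).
Proof.
move=> [t t01 ->].
have h4 : (0 : R) < 4 by lra.
split; first exact: (legendre_Fq (wmix_pos t01) (wmix_le t01) h4).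
by move=> p; rewrite dom_Fq vint_setT.
Qed.

Lemma fam_conv : fam_convex fam.
Proof.
move=> F G t [a /andP[a0 a1] ->] [b /andP[b0 b1] ->] /andP[t0 t1].
exists (t * a + (1 - t) * b); first by apply/andP; split; nra.
apply/funext => p; rewrite /Fq -!EFinM -EFinD; congr EFin.
rewrite /Q -sum2_lin; apply: eq_bigr => x _; apply: eq_bigr => y _.
rewrite /wmix; ring.
Qed.

Lemma Pi_closed : vclosed Pi.
Proof.
move=> p Hp.
have approx e : 0 < e -> exists q, Pi q /\ forall x y, `|q x y - p x y| < e.
  move=> e0; have [q [Pq Hl]] := Hp e e0; exists q; split => // x y.
  exact: le_lt_trans (coord_le_l1 (vsub q p) x y) Hl.
split; [split|].
- move=> x y; rewrite leNgt; apply/negP => hn.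
  have hn' : 0 < - p x y by rewrite oppr_gt0.
  have [q [[[q0 _] _] H]] := approx _ hn'.
  have := q0 x y; have /ltr_normlP [h1 h2] := H x y; lra.
- move=> x; rewrite big_bool /=; apply/eqP; rewrite -subr_eq0; apply/eqP.
  apply: zero_of_small => e e0.
  have [q [[[_ qs] _] H]] := approx e e0.
  have := qs x; rewrite big_bool /= => hs.
  have /ltr_normlP [a1 a2] := H x true; have /ltr_normlP [b1 b2] := H x false.
  apply/ler_normlP; split; lra.
- move=> x; apply/funext => y; apply/eqP; rewrite -subr_eq0; apply/eqP.
  apply: zero_of_small => e e0.
  have [q [[_ qc] H]] := approx e e0.
  have hq := congr1 (fun f => f y) (qc x); simpl in hq.
  have /ltr_normlP [a1 a2] := H x y; have /ltr_normlP [b1 b2] := H (~~ x) y.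
  apply/ler_normlP; split; lra.
Qed.

Definition Bq (t : R) (q : V) : R :=
  \sum_x \sum_y wmix t x y * (q x y - pi0 x y) ^+ 2.

Lemma h4 : (0 : R) < 4. Proof. lra. Qed.

Lemma breg_fam t q (t01 : 0 <= t <= 1) :
  bregman (Fq (wmix t)) q pi0 = (Bq t q)%:E.
Proof. exact: (bregman_Fq (wmix_pos t01) (wmix_le t01) h4). Qed.

Lemma t1 : 0 <= (1 : R) <= 1. Proof. by rewrite ler01 lexx. Qed.
Lemma t0 : 0 <= (0 : R) <= 1. Proof. by rewrite ler01 lexx. Qed.

Lemma mm_pimm : (mm_objective fam pi0 pimm <= (5 / 2)%:E)%E.
Proof.
apply: ge_ereal_sup => _ [F [t t01 ->] <-].
rewrite breg_fam // lee_fin /Bq !big_bool /= /wmix /w1 /w2 /pi0 /pimm /=.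
rewrite !expr2; lra.
Qed.

Lemma feas_coords q : (Pi `&` C_coh negb) q ->
  [/\ q true true = q false true, q true false = q false false &
      q true true + q true false = 1].
Proof.
move=> [_ [[_ qs] qc]].
have := qs true; rewrite big_bool /= => s.
have a := congr1 (fun f => f true) (qc true).
have b := congr1 (fun f => f false) (qc true).
by split.
Qed.

Lemma mm_lb q : (Pi `&` C_coh negb) q ->
  ((Bq 1 q)%:E <= mm_objective fam pi0 q)%E /\ ((Bq 0 q)%:E <= mm_objective fam pi0 q)%E.
Proof.
move=> _; split; apply: ereal_sup_ubound.
- by exists (Fq (wmix 1)); [exists 1 => //; exact: t1 | exact: breg_fam t1].
- by exists (Fq (wmix 0)); [exists 0 => //; exact: t0 | exact: breg_fam t0].
Qed.

Lemma Bsum q : (Pi `&` C_coh negb) q ->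
  Bq 1 q + Bq 0 q = 10 * ((q true true) ^+ 2 + (1 - q true true) ^+ 2).
Proof.
move=> /feas_coords [a b c].
rewrite /Bq !big_bool /= /wmix /w1 /w2 /pi0 /=.
have -> : q false true = q true true by [].
have -> : q false false = 1 - q true true by lra.
have -> : q true false = 1 - q true true by lra.
ring.
Qed.

End Ex.

Lemma pi0_all (R : realType) : Pi_all (pi0 R).
Proof.
split; first by case; case => /=; lra.
by case; rewrite big_bool /=; lra.
Qed.

Lemma pi0_not_coh (R : realType) : ~ C_coh negb (pi0 R).
Proof.
move=> [_ c]; have := congr1 (fun f => f true) (c true); rewrite /pi0 /=.
move=> h; lra.
Qed.

Lemma Pi_convex (R : realType) : vconvex (@Pi R).
Proof.
move=> p q t [[p0 ps] pc] [[q0 qs] qc] /andP[t0 t1].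
split; [split|].
- move=> x y; rewrite /vcomb; apply: addr_ge0; apply: mulr_ge0 => //; lra.
- move=> x; rewrite big_bool /= /vcomb.
  have := ps x; have := qs x; rewrite !big_bool /= => a b.
  have : t * (p x true + p x false) + (1 - t) * (q x true + q x false) = 1.
    by rewrite a b; ring.
  lra.
- by move=> x; apply/funext => y; rewrite /vcomb (pc x) (qc x).
Qed.

Lemma pimm_feas (R : realType) : (@Pi R `&` C_coh negb) (pimm R).
Proof.
have h : Pi_all (pimm R).
  split; first by move=> x y; rewrite /pimm; lra.
  by move=> x; rewrite big_bool /pimm /=; lra.
by split; split.
Qed.

Lemma pis_feas (R : realType) : (@Pi R `&` C_coh negb) (pis R).
Proof.
have h : Pi_all (pis R).
  split; first by move=> x [] /=; lra.
  by move=> x; rewrite big_bool /pis /=; lra.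
by split; split.
Qed.

Local Close Scope ring_scope.

Theorem theorem6 :
  exists (X Y : finType) (Pi : set (vec Rdefinitions.R X Y)) (Phi : X -> X)
         (pi0 : vec Rdefinitions.R X Y)
         (fam : set (vec Rdefinitions.R X Y -> \bar Rdefinitions.R)),
    [/\ [/\ Pi `<=` @Pi_all Rdefinitions.R X Y, vclosed Pi & vconvex Pi],
        (forall x, Phi (Phi x) = x) /\ C_coh Phi <> @Pi_all Rdefinitions.R X Y,
        Pi_all pi0 /\ ~ Pi pi0,
        fam_convex fam /\ (forall F, fam F -> legendre F /\ vinterior (dom F) pi0)
      & exists pi_mm,
          [/\ is_minimax Pi Phi fam pi0 pi_mm,
              (forall q, is_minimax Pi Phi fam pi0 q -> q = pi_mm)
            & exists F pi_s,
                [/\ fam F, (Pi `&` C_coh Phi) pi_s, vinterior (dom F) pi_mm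
                  & (bregman F pi_s pi0 < bregman F pi_s pi_mm)%E]]].
Proof.
set R := Rdefinitions.R.
exists bool, bool, (@Pi R), negb, (pi0 R), (@fam R).
have lb : forall q, (@Pi R `&` C_coh negb) q ->
    ((5 / 2 : R)%R%:E <= mm_objective (@fam R) (pi0 R) q)%E.
  move=> q hq; have [b1 b0] := mm_lb hq; have s := Bsum hq.
  have [h|h] := leP (5 / 2 : R)%R (Bq 1 q).
    by apply: le_trans b1; rewrite lee_fin.
  apply: le_trans b0; rewrite lee_fin.
  have := sqr_ge0 (2 * q true true - 1)%R; nra.
split.
- split; [by move=> p [] | exact: Pi_closed | exact: Pi_convex].
- split; first by move=> x; exact: negbK.
  move=> E; apply: (@pi0_not_coh R); rewrite E; exact: pi0_all.
- split; first exact: pi0_all.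
  exact: (@pi0_not_coh R).
- split; first exact: fam_conv.
  by move=> F hF; have [l i] := fam_legendre hF; split.
- exists (pimm R); split.
  + split; first exact: pimm_feas.
    move=> q hq; apply: le_trans (mm_pimm R) (lb q hq).
  + move=> q [hq hmin].
    have := hmin _ (pimm_feas R) => hle.
    have hle' := le_trans hle (mm_pimm R).
    have [b1 b0] := mm_lb hq; have s := Bsum hq.
    have c1 := le_trans b1 hle'; have c0 := le_trans b0 hle'.
    rewrite lee_fin in c1; rewrite lee_fin in c0.
    have ha : (q true true = 1 / 2)%R.
      have := sqr_ge0 (2 * q true true - 1)%R; nra.
    have [a b c] := feas_coords hq.
    apply/funext => x; apply/funext => y; rewrite /pimm.
    by case: x; case: y; lra.
  + exists (Fq (wmix 1%R)), (pis R); split.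
    * by exists 1%R => //; exact: (@t1 R).
    * exact: pis_feas.
    * by rewrite dom_Fq vint_setT.
    * rewrite breg_fam; last exact: (@t1 R).
      rewrite (bregman_Fq (wmix_pos (@t1 R)) (wmix_le (@t1 R)) (@h4 R)).
      rewrite lte_fin /Bq !big_bool /= /wmix /w1 /w2 /pi0 /pis /pimm /=.
      rewrite !expr2; lra.
Qed.
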